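(* Let $(\mathcal O,\mathcal D)$ be an antichain duality of $\sigma$-structures such that the members of $\mathcal O$ are cores. Then $|\mathcal D|=1$ if and only if the members of $\mathcal O$ are connected.
   Context: A type $\sigma$ is a finite set of relation symbols with arities; a $\sigma$-structure $\mathbf A$ is a finite set $V(\mathbf A)$ with an $r$-ary relation $R(\mathbf A)$ for each $R\in\sigma$ of arity $r$; homomorphisms are relation-preserving maps and $\mathbf A\to\mathbf B$ means one exists. $\mathbf A$ is a core if every homomorphically equivalent structure has at least as many vertices. $(\mathcal O,\mathcal D)$ is a duality pair if for every $\sigma$-structure $\mathbf A$: $\mathbf A\to\mathbf D$ for some $\mathbf D\in\mathcal D$ iff no $\mathbf T\in\mathcal O$ satisfies $\mathbf T\to\mathbf A$; it is an antichain duality if moreover $\mathcal O\cup\mathcal D$ is an antichain (no homomorphism between two distinct members). $\mathbf A$ is connected if its incidence multigraph (bipartite, with parts $V(\mathbf A)$ and the blocks $(R,(x_1,\dots,x_r))$, $(x_1,\dots,x_r)\in R(\mathbf A)$, with an edge from $x_i$ to the block for each $i$) is connected. *)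

(* Defs.v *)
From mathcomp Require Import all_boot.
Set Implicit Arguments. Unset Strict Implicit. Unset Printing Implicit Defensive.

(* A sigma-structure has vertex set 'I_n (every finite
   set is in bijection with some 'I_n) and, for each symbol s, an ar s-ary
   relation given as a set of ar s-tuples of vertices. *)
Section Structures.
Variables (S : finType) (ar : S -> nat).

Record struct := Struct {
  vn : nat;
  rels : forall s : S, {set (ar s).-tuple 'I_vn}
}.

Definition hom (A B : struct) : Prop :=
  exists f : 'I_(vn A) -> 'I_(vn B),
    forall (s : S) (t : (ar s).-tuple 'I_(vn A)),
      t \in rels A s -> map_tuple f t \in rels B s.

Definition is_core (A : struct) : Prop :=
  forall B : struct, hom A B -> hom B A -> vn A <= vn B.

(* Incidence multigraph: nodes are vertices (inl) and blocks (inr (s; t)) with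
   t \in rels A s; vertex x is joined to block (s; t) for each position of x in t. *)
Definition inode (A : struct) : finType :=
  ('I_(vn A) + {s : S & (ar s).-tuple 'I_(vn A)})%type.

Definition in_graph (A : struct) (u : inode A) : bool :=
  match u with
  | inl _ => true
  | inr b => tagged b \in rels A (tag b)
  end.

Definition incident (A : struct) (u v : inode A) : bool :=
  match u, v with
  | inl x, inr b => x \in (tagged b : seq _)
  | inr b, inl x => x \in (tagged b : seq _)
  | _, _ => false
  end.

Definition iedge (A : struct) : rel (inode A) :=
  fun u v => [&& in_graph u, in_graph v & incident u v].

Definition connected (A : struct) : Prop :=
  (exists u : inode A, in_graph u) /\
  forall u v : inode A, in_graph u -> in_graph v -> connect (@iedge A) u v.

Definition duality_pair (O D : struct -> Prop) : Prop :=
  forall A : struct,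
    (exists2 B, D B & hom A B) <-> ~ (exists2 T, O T & hom T A).

Definition antichain (C : struct -> Prop) : Prop :=
  forall A B : struct, C A -> C B -> A <> B -> ~ hom A B.

Definition antichain_duality (O D : struct -> Prop) : Prop :=
  duality_pair O D /\ antichain (fun A => O A \/ D A).

End Structures.

(* Main.v *)
Require Import Defs.
From mathcomp Require Import all_boot.
From Stdlib Require Import Classical.
Set Implicit Arguments. Unset Strict Implicit. Unset Printing Implicit Defensive.

Section Aux.
Variables (S : finType) (ar : S -> nat).
Notation st := (struct ar).

Lemma hom_refl (A : st) : hom A A.
Proof.
exists id => s t Ht.
have -> : map_tuple id t = t by apply: val_inj; rewrite /= map_id.
exact: Ht.
Qed.

Lemma hom_trans (A B C : st) : hom A B -> hom B C -> hom A C.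
Proof.
move=> [f Hf] [g Hg]; exists (g \o f) => s t Ht.
have -> : map_tuple (g \o f) t = map_tuple g (map_tuple f t).
  by apply: val_inj; rewrite /= map_comp.
exact/Hg/Hf.
Qed.

Definition subs (A : st) (V : {set 'I_(vn A)})
  (keep : forall s, pred ((ar s).-tuple 'I_(vn A))) : st :=
  {| vn := #|V|;
     rels := fun s => [set t : (ar s).-tuple 'I_#|V| |
        (map_tuple enum_val t \in rels A s) && keep s (map_tuple enum_val t)] |}.

Lemma subs_hom_out (A : st) (V : {set 'I_(vn A)}) keep : hom (@subs A V keep) A.
Proof. by exists enum_val => s t; rewrite inE => /andP[]. Qed.

Lemma subs_hom_in (A : st) (V : {set 'I_(vn A)}) keep (g : 'I_(vn A) -> 'I_(vn A)) :
  (forall x, g x \in V) ->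
  (forall s t, t \in rels A s ->
     (map_tuple g t \in rels A s) && keep s (map_tuple g t)) ->
  hom A (@subs A V keep).
Proof.
move=> gV Hg.
have: forall x, exists i : 'I_#|V|, enum_val i = g x.
  by move=> x; exists (enum_rank_in (gV x) (g x)); rewrite enum_rankK_in.
case/fin_all_exists => h Hh; exists h => s t Ht; rewrite inE.
have -> : map_tuple enum_val (map_tuple h t) = map_tuple g t.
  by apply: val_inj; rewrite /= -map_comp; apply: eq_map => x; exact: Hh.
exact: Hg.
Qed.

Lemma lift_tuple n k (V : {set 'I_n}) (t : k.-tuple 'I_n) :
  (forall x, x \in t -> x \in V) ->
  exists t1 : k.-tuple 'I_#|V|, map_tuple enum_val t1 = t.
Proof.
move=> Ht.
have: forall j : 'I_k, exists i : 'I_#|V|, enum_val i = tnth t j.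
  move=> j; have Hj : tnth t j \in V by apply/Ht/mem_tnth.
  by exists (enum_rank_in Hj (tnth t j)); rewrite enum_rankK_in.
case/fin_all_exists => h Hh; exists [tuple h j | j < k].
by apply: eq_from_tnth => j; rewrite tnth_map tnth_mktuple.
Qed.

Lemma core_endo (A : st) (g : 'I_(vn A) -> 'I_(vn A)) :
  is_core A -> (forall s t, t \in rels A s -> map_tuple g t \in rels A s) ->
  injective g.
Proof.
move=> Hc Hg.
pose V := g @: [set: 'I_(vn A)].
have H1 : hom A (@subs A V (fun _ _ => true)).
  apply: (@subs_hom_in _ _ _ g) => [x|s t Ht]; first by apply: imset_f.
  by rewrite Hg.
have Hle := Hc _ H1 (subs_hom_out _ _).
have : #|V| == #|[set: 'I_(vn A)]|.
  rewrite eqn_leq cardsT card_ord Hle andbT.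
  by have := max_card (mem V); rewrite card_ord.
move/imset_injP => Hi x y Hxy; apply: Hi; rewrite ?inE //.
Qed.

Lemma endo_onto_tuples (A : st) (g : 'I_(vn A) -> 'I_(vn A)) : injective g ->
  (forall s t, t \in rels A s -> map_tuple g t \in rels A s) ->
  forall s t, t \in rels A s -> exists2 t', t' \in rels A s & t = map_tuple g t'.
Proof.
move=> Hi Hg s t Ht.
have Hmi : injective (fun u : (ar s).-tuple 'I_(vn A) => map_tuple g u).
  by move=> u v /(congr1 val) /= /(inj_map Hi) /val_inj.
have Hsub : [set map_tuple g u | u in rels A s] \subset rels A s.
  by apply/subsetP => _ /imsetP[u Hu ->]; exact: Hg.
have Heq : [set map_tuple g u | u in rels A s] = rels A s.
  by apply/eqP; rewrite eqEcard Hsub /= card_imset.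
by move: Ht; rewrite -{1}Heq => /imsetP[u Hu ->]; exists u.
Qed.

Lemma sub_not_target (O D : st -> Prop) (T : st) (V : {set 'I_(vn T)}) keep :
  antichain (fun A => O A \/ D A) -> O T -> is_core T ->
  ((exists x, x \notin V) \/
   (exists s t, t \in rels T s /\ ~~ keep s t)) ->
  ~ (exists2 T', O T' & hom T' (@subs T V keep)).
Proof.
move=> Hanti HT Hc Hout [T' HT' H'].
have HT'T : hom T' T := hom_trans H' (subs_hom_out _ _).
have E : T' = T.
  apply: NNPP => Hne; exact: (Hanti T' T (or_introl HT') (or_introl HT) Hne HT'T).
subst T'.
case: H' => h Hh.
pose g x := enum_val (h x).
have Hg : forall s t, t \in rels T s ->
    (map_tuple g t \in rels T s) && keep s (map_tuple g t).
  move=> s t Ht; have := Hh s t Ht; rewrite inE.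
  have -> : map_tuple enum_val (map_tuple h t) = map_tuple g t.
    by apply: val_inj; rewrite /= -map_comp.
  done.
have Hg' : forall s t, t \in rels T s -> map_tuple g t \in rels T s.
  by move=> s t /Hg /andP[].
have Hi := core_endo Hc Hg'.
case: Hout => [[x Hx] | [s [t [Ht Hk]]]].
- have [g' gK g'K] := injF_bij Hi.
  move: Hx; rewrite -(g'K x) /g; by rewrite (enum_valP (h (g' x))).
- have [t' Ht' Et] := endo_onto_tuples Hi Hg' Ht.
  move: Hk; rewrite Et; by case/andP: (Hg s t' Ht') => _ ->.
Qed.

Lemma combine (A B : st) (V : {set 'I_(vn A)})
  (k : forall s, pred ((ar s).-tuple 'I_(vn A))) :
  hom (@subs A V k) B -> hom (@subs A (~: V) (fun s t => ~~ k s t)) B ->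
  (forall s t, t \in rels A s -> k s t -> forall x, x \in t -> x \in V) ->
  (forall s t, t \in rels A s -> ~~ k s t -> forall x, x \in t -> x \notin V) ->
  hom A B.
Proof.
move=> [g1 H1] [g2 H2] Hk Hnk.
have: forall x : 'I_(vn A), exists y : 'I_(vn B),
    (forall i : 'I_#|V|, enum_val i = x -> g1 i = y) /\
    (forall j : 'I_#|~: V|, enum_val j = x -> g2 j = y).
  move=> x; case: (boolP (x \in V)) => Hx.
  - exists (g1 (enum_rank_in Hx x)); split => i Hi.
      by subst x; rewrite enum_valK_in.
    by have := enum_valP i; rewrite Hi inE Hx.
  - have Hx' : x \in ~: V by rewrite inE.
    exists (g2 (enum_rank_in Hx' x)); split => i Hi.
      by have := enum_valP i; rewrite Hi (negbTE Hx).
    by subst x; rewrite enum_valK_in.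
case/fin_all_exists => f Hf; exists f => s t Ht.
case: (boolP (k s t)) => Hkt.
- have [t1 Et1] := lift_tuple (Hk s t Ht Hkt).
  have Ht1 : t1 \in rels (@subs A V k) s by rewrite inE Et1 Ht Hkt.
  have -> : map_tuple f t = map_tuple g1 t1.
    rewrite -Et1; apply: val_inj => /=; rewrite -map_comp; apply: eq_map => i /=.
    by rewrite ((Hf _).1 i erefl).
  exact: H1.
- have Hv : forall x, x \in t -> x \in ~: V by move=> x Hx; rewrite inE (Hnk s t).
  have [t1 Et1] := lift_tuple Hv.
  have Ht1 : t1 \in rels (@subs A (~: V) (fun s t => ~~ k s t)) s.
    by rewrite inE Et1 Ht Hkt.
  have -> : map_tuple f t = map_tuple g2 t1.
    rewrite -Et1; apply: val_inj => /=; rewrite -map_comp; apply: eq_map => i /=.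
    by rewrite ((Hf _).2 i erefl).
  exact: H2.
Qed.

Lemma dir1 (O D : st -> Prop) D0 : antichain_duality O D ->
  (forall T, O T -> is_core T) ->
  (forall B, D B <-> B = D0) -> forall T, O T -> connected T.
Proof.
move=> [Hdual Hanti] Hcore HD T HT.
have D0D : D D0 by apply/HD.
have noO0 : ~ (exists2 T', O T' & hom T' D0).
  by apply/Hdual; exists D0 => //; exact: hom_refl.
have HnT : ~ hom T D0 by move=> H; apply: noO0; exists T.
have toD0 : forall A, ~ (exists2 T', O T' & hom T' A) -> hom A D0.
  by move=> A /Hdual [B /HD -> ].
split.
  apply: NNPP => Hne; apply: HnT.
  have: forall x : 'I_(vn T), exists y : 'I_(vn D0), True.
    by move=> x; exfalso; apply: Hne; exists (inl x).
  case/fin_all_exists => f _; exists f => s t Ht.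
  by exfalso; apply: Hne; exists (inr (existT _ s t)).
move=> u v Hu Hv; apply: NNPP => Hnc.
pose C : pred (inode T) := connect (@iedge S ar T) u.
pose V1 : {set 'I_(vn T)} := [set x | C (inl x)].
pose k1 := fun s (t : (ar s).-tuple 'I_(vn T)) => C (inr (existT _ s t)).
have H1 : hom (@subs T V1 k1) D0.
  apply: toD0; apply: (sub_not_target Hanti HT (Hcore T HT)).
  case: v Hv Hnc => [x|[s t]] Hv Hnc.
    by left; exists x; rewrite inE; apply/negP.
  by right; exists s, t; split => //; apply/negP.
have H2 : hom (@subs T (~: V1) (fun s t => ~~ k1 s t)) D0.
  apply: toD0; apply: (sub_not_target Hanti HT (Hcore T HT)).
  case Eu: u Hu => [x|[s t]] Hu.
    by left; exists x; rewrite !inE negbK /C Eu connect0.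
  by right; exists s, t; split => //; rewrite negbK /k1 /C Eu connect0.
apply: HnT; apply: (combine H1 H2).
  move=> s t Ht Hk x Hx; rewrite inE; apply: (connect_trans Hk).
  by apply: connect1; rewrite /iedge /= Ht.
move=> s t Ht Hk x Hx; rewrite inE; apply/negP => Hc; move/negP: Hk; apply.
apply: (connect_trans Hc); apply: connect1; by rewrite /iedge /= Ht.
Qed.

Definition dunion (B C : st) : st :=
  {| vn := vn B + vn C;
     rels := fun s => [set map_tuple (lshift (vn C)) t | t in rels B s] :|:
                      [set map_tuple (@rshift (vn B) (vn C)) t | t in rels C s] |}.

Lemma hom_dl (B C : st) : hom B (dunion B C).
Proof. by exists (lshift (vn C)) => s t Ht; rewrite inE imset_f. Qed.

Lemma hom_dr (B C : st) : hom C (dunion B C).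
Proof. by exists (@rshift (vn B) (vn C)) => s t Ht; rewrite inE imset_f ?orbT. Qed.

Lemma conn_union (T B C : st) : connected T -> hom T (dunion B C) ->
  hom T B \/ hom T C.
Proof.
move=> [[w0 Hw0] Hc] [f Hf].
pose L s := [set map_tuple (lshift (vn C)) t | t in rels B s].
pose side (w : inode T) : bool :=
  match w with inl x => f x < vn B | inr b => map_tuple f (tagged b) \in L (tag b) end.
have key : forall s t x, t \in rels T s -> x \in t ->
    (f x < vn B) = (map_tuple f t \in L s).
  move=> s t x Ht Hx.
  have Hfx : f x \in (map_tuple f t : seq _) by rewrite /= map_f.
  move: (Hf s t Ht); rewrite inE => /orP[] /imsetP[u Hu Eu].
    rewrite Eu imset_f //; move: Hfx; rewrite Eu => /mapP[i _ ->].
    by rewrite /= ltn_ord.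
  have Hge : vn B <= f x by move: Hfx; rewrite Eu => /mapP[i _ ->]; rewrite /= leq_addr.
  rewrite ltnNge Hge; symmetry; apply/negP => /imsetP[u' _ Eu'].
  move: Hfx; rewrite Eu' => /mapP[i _ Ei]; move: Hge; by rewrite Ei /= leqNgt ltn_ord.
have Hcl : closed (@iedge S ar T) side.
  move=> [x|[s t]] [y|[s' t']]; rewrite /iedge /= ?andbF // => /andP[Ht Hx];
    rewrite -!topredE /= (key _ _ _ Ht Hx) //.
have Hside : forall w, in_graph w -> side w = side w0.
  by move=> w Hw; symmetry; apply: (closed_connect Hcl); apply: Hc.
case Hs0: (side w0).
- left.
  have: forall x : 'I_(vn T), exists i : 'I_(vn B), f x = lshift (vn C) i.
    move=> x; have := Hside (inl x) erefl; rewrite Hs0 /= => Hlt.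
    by exists (Ordinal Hlt); apply: val_inj.
  case/fin_all_exists => g Hg; exists g => s t Ht.
  have := Hside (inr (existT _ s t)) Ht; rewrite Hs0 /= => /imsetP[u Hu Eu].
  suff -> : map_tuple g t = u by [].
  apply: val_inj; apply: (inj_map (@lshift_inj _ (vn C))).
  move: (congr1 val Eu) => /= <-; rewrite -map_comp; apply: eq_map => x /=.
  by rewrite Hg.
- right.
  have: forall x : 'I_(vn T), exists j : 'I_(vn C), f x = @rshift (vn B) (vn C) j.
    move=> x; have := Hside (inl x) erefl; rewrite Hs0 /= => /negbT; rewrite -leqNgt => Hge.
    have Hlt : f x - vn B < vn C by rewrite -(ltn_add2l (vn B)) subnKC // ltn_ord.
    by exists (Ordinal Hlt); apply: val_inj; rewrite /= subnKC.
  case/fin_all_exists => g Hg; exists g => s t Ht.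
  have Hn := Hside (inr (existT _ s t)) Ht; rewrite Hs0 /= in Hn.
  move: (Hf s t Ht); rewrite inE Hn /= => /imsetP[u Hu Eu].
  suff -> : map_tuple g t = u by [].
  apply: val_inj; apply: (inj_map (@rshift_inj (vn B) (vn C))).
  move: (congr1 val Eu) => /= <-; rewrite -map_comp; apply: eq_map => x /=.
  by rewrite Hg.
Qed.

Lemma dir2 (O D : st -> Prop) : antichain_duality O D ->
  (forall T, O T -> connected T) -> exists D0, forall B, D B <-> B = D0.
Proof.
move=> [Hdual Hanti] Hconn.
pose E : st := {| vn := 0; rels := fun s => set0 |}.
have [D0 HD0 _] : exists2 B, D B & hom E B.
  apply/Hdual => -[T HT [f Hf]].
  have [[[w|[s t]] Hw] _] := Hconn T HT.
    by case: (f w).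
  by have := Hf s t Hw; rewrite inE.
exists D0 => B; split; last by move->.
move=> HB.
have notD : forall A, D A -> forall T, O T -> ~ hom T A.
  move=> A HA T HT HTA.
  have : exists2 B', D B' & hom A B' by exists A => //; exact: hom_refl.
  by move/Hdual; apply; exists T.
have [D3 HD3 HU] : exists2 D3, D D3 & hom (dunion B D0) D3.
  apply/Hdual => -[T HT HTU].
  case: (conn_union (Hconn T HT) HTU) => H.
    exact: (notD B HB T HT H).
  exact: (notD D0 HD0 T HT H).
have eq1 : forall A, D A -> hom A D3 -> A = D3.
  move=> A HA HAD; apply: NNPP => Hne.
  exact: (Hanti A D3 (or_intror HA) (or_intror HD3) Hne HAD).
rewrite (eq1 B HB (hom_trans (hom_dl B D0) HU)).
by rewrite (eq1 D0 HD0 (hom_trans (hom_dr B D0) HU)).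
Qed.

End Aux.

Theorem lemma5p2 (S : finType) (ar : S -> nat) (O D : struct ar -> Prop) :
  antichain_duality O D ->
  (forall T, O T -> is_core T) ->
  ((exists D0 : struct ar, forall B, D B <-> B = D0) <->
   (forall T, O T -> connected T)).
Proof.
move=> Had Hc; split.
  by case=> D0 HD; exact: (dir1 Had Hc HD).
by move=> Hconn; exact: (dir2 Had Hconn).
Qed.
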